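(* Let $n,m,t$ be positive integers. There is a map $\Phi:[n]^n\to[n]^n$ with the following property. Let $\sigma\in\mathcal{S}_n$, let $I\subseteq[n]$ be a set of $t$ positions with $\sigma(i)>m$ for all $i\in I$, and let $\sigma_e$ be given by $\sigma_e(i)=\sigma(i)-1$ for $i\in I$ and $\sigma_e(i)=\sigma(i)$ for $i\notin I$. Then $\hat\sigma=\Phi(\sigma_e)$ satisfies: there exist $\ell\le t$ and distinct positions $i_1,\ldots,i_\ell\in[n]$ with $\sigma(i_j)>m$ for all $j\in[\ell]$ and $\sigma(i_j)\le\sigma(i_{j+1})-2$ for all $j\in[\ell-1]$, such that $\hat\sigma(i)=\sigma(i)-1$ for $i\in\{i_1,\ldots,i_\ell\}$ and $\hat\sigma(i)=\sigma(i)$ for all other $i\in[n]$.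
   Context: $[n]=\{1,\ldots,n\}$ and $\mathcal{S}_n$ is the set of permutations of $[n]$, written as sequences $(\sigma(1),\ldots,\sigma(n))$. *)

(* Defs.v *)
From mathcomp Require Import all_boot all_fingroup.
Set Implicit Arguments. Unset Strict Implicit. Unset Printing Implicit Defensive.

(* Convention: [n] = {1..n} is represented by 'I_n = {0..n-1};
   the element x : 'I_n stands for the number nat1 x = x + 1 in [n]. *)
Definition nat1 {n : nat} (x : 'I_n) : nat := (nat_of_ord x).+1.

(* Main.v *)
Require Import Defs.
From mathcomp Require Import all_boot all_fingroup.
From mathcomp Require Import zify.

Definition cge {n} (f : {ffun 'I_n -> 'I_n}) (k : nat) : nat :=
  \sum_(j < n) (k <= f j).
Definition Bb {n} (f : {ffun 'I_n -> 'I_n}) (k : nat) : bool := cge f k < n - k.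
Definition PhiD {n} (f : {ffun 'I_n -> 'I_n}) : {ffun 'I_n -> 'I_n} :=
  [ffun i => if Bb f (f i) && Bb f (f i).+1 then insubd (f i) (f i).+1 else f i].

Lemma sum_ge n k : \sum_(j < n) (k <= j) = n - k.
Proof.
elim: n => [|n IH]; first by rewrite big_ord0.
rewrite big_ord_recr /= IH; case: leqP => H; timeout 10 lia.
Qed.

Lemma key n m (sigma : {perm 'I_n}) (I : {set 'I_n}) (f : {ffun 'I_n -> 'I_n}) :
  0 < m ->
  (forall i, i \in I -> m < nat1 (sigma i)) ->
  (forall i, f i = (if i \in I then (sigma i).-1 else sigma i) :> nat) ->
  forall k, Bb f k = [exists j in I, val (sigma j) == k].
Proof.
move=> hm hI hf k.
have E : cge f k + \sum_(j < n) ((j \in I) && (val (sigma j) == k)) = n - k.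
  rewrite /cge -big_split /=.
  rewrite -(sum_ge n k) [in RHS](reindex_inj (@perm_inj _ sigma)) /=.
  apply: eq_bigr => j _; rewrite hf.
  case: ifP => jI; last by rewrite addn0.
  have := hI j jI; rewrite /nat1 => h.
  rewrite -subn1; case: eqP => e; rewrite /=; timeout 10 lia.
rewrite /Bb.
case: existsP => [[j0 /andP [j0I /eqP e0]] | ne].
  rewrite (bigD1 j0) /= ?j0I ?e0 ?eqxx // big1 in E.
    by timeout 10 lia.
  move=> j; rewrite ?andTb => jn; case: andP => // [[_ /eqP ej]].
  move: jn; rewrite -e0 in ej; have /perm_inj -> : sigma j = sigma j0 by apply: val_inj.
  by rewrite eqxx.
rewrite big1 in E; first by timeout 10 lia.
move=> j _; case: andP => // h; case: ne; exists j; exact/andP.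
Qed.

Theorem lemma2 (n m t : nat) (hn : 0 < n) (hm : 0 < m) (ht : 0 < t) :
  exists Phi : {ffun 'I_n -> 'I_n} -> {ffun 'I_n -> 'I_n},
  forall (sigma : {perm 'I_n}) (I : {set 'I_n}),
    #|I| = t ->
    (forall i, i \in I -> m < nat1 (sigma i)) ->
    forall sigma_e : {ffun 'I_n -> 'I_n},
    (forall i, nat1 (sigma_e i) =
               (if i \in I then nat1 (sigma i) - 1 else nat1 (sigma i))) ->
    exists s : seq 'I_n,
      [/\ size s <= t,
          uniq s,
          (forall i, i \in s -> m < nat1 (sigma i)),
          sorted (fun a b => nat1 (sigma a) <= nat1 (sigma b) - 2) s &
          (forall i, nat1 (Phi sigma_e i) =
                     (if i \in s then nat1 (sigma i) - 1 else nat1 (sigma i)))].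
Proof.
exists (@PhiD n) => sigma I cI hI f hf0.
have hf : forall i, f i = (if i \in I then (sigma i).-1 else sigma i) :> nat.
  move=> i; have := hf0 i; rewrite /nat1; case: ifP => _; timeout 10 lia.
have K := @key n m sigma I f hm hI hf.
pose S := [set i in I | ~~ [exists j in I, (val (sigma j)).+1 == sigma i]].
have SI : S \subset I by apply/subsetP => i; rewrite inE => /andP [].
pose leS := fun a b : 'I_n => sigma a <= sigma b.
exists (sort leS (enum S)).
have us : uniq (sort leS (enum S)) by rewrite sort_uniq enum_uniq.
have memS : forall i, (i \in sort leS (enum S)) = (i \in S).
  by move=> i; rewrite mem_sort mem_enum.
split.
- by rewrite size_sort -cardE -cI subset_leq_card.
- exact: us.
- by move=> i; rewrite memS => /(subsetP SI) /hI.
- apply: pairwise_sorted.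
  have : pairwise leS (sort leS (enum S)).
    rewrite -sorted_pairwise; first by apply: sort_sorted => a b; apply: leq_total.
    by move=> a b c; rewrite /leS; apply: leq_trans.
  have : all (mem S) (sort leS (enum S)) by apply/allP => x; rewrite memS.
  elim: (sort leS (enum S)) us => [|x s IH] //=.
  move=> /andP [xs us] /andP [xS aS] /andP [al pw].
  apply/andP; split; last exact: IH.
  apply/allP => y ys.
  have yS : y \in S by move/allP: aS => /(_ y ys).
  have lxy := allP al y ys.
  have nxy : x != y by apply: contraNneq xs => ->.
  have nv : val (sigma x) != val (sigma y).
    apply: contra nxy => /eqP /val_inj /perm_inj ->; exact: eqxx.
  move: yS; rewrite inE => /andP [_ ny].
  have nadj : (val (sigma x)).+1 != sigma y.
    apply: contra ny => e; apply/existsP; exists x.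
    move: xS; rewrite inE => /andP [-> _] /=; exact: e.
  have nv' : nat_of_ord (sigma x) != nat_of_ord (sigma y) := nv.
  have na' : (nat_of_ord (sigma x)).+1 != nat_of_ord (sigma y) := nadj.
  rewrite /leS in lxy; rewrite /nat1.
  move: lxy nv' na'; move: (nat_of_ord (sigma x)) (nat_of_ord (sigma y)) => a b.
  clear; move=> *; timeout 10 lia.
- move=> i; rewrite memS /PhiD ffunE /nat1 inE.
  have hfi := hf i.
  case iI: (i \in I) => /= in hfi *.
  + have := hI i iI; rewrite /nat1 => hsi.
    have B1 : Bb f (f i).+1.
      rewrite K; apply/existsP; exists i; rewrite iI /= hfi; apply/eqP; timeout 10 lia.
    rewrite B1 andbT K.
    have -> : [exists j in I, val (sigma j) == f i] =
              [exists j in I, (val (sigma j)).+1 == sigma i].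
      apply: eq_existsb => j; rewrite hfi; case: (j \in I) => //=.
      apply/eqP/eqP; timeout 10 lia.
    case: existsP => _ /=.
      rewrite val_insubd; have := ltn_ord (sigma i); case: ifP; timeout 10 lia.
    timeout 10 lia.
  + have -> : Bb f (f i) = false.
      rewrite K; apply/negbTE/existsP => [[j /andP [jI /eqP e]]].
      rewrite hfi in e; have /perm_inj eji : sigma j = sigma i by apply: val_inj.
      by move: jI; rewrite eji iI.
    by rewrite hfi.
Qed.
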